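(* Let $M$ be the star matrix of a partition of the hypercube ${\bf Z}_q^n$ into subcubes all of the same dimension, and suppose $M$ contains a submatrix $T$ which is a transfractal. Then all rows of $M$ that pass through $T$ coincide in every column of $M$ not belonging to $T$; that is, for every column $s$ of $M$ not among the columns of $T$, all rows of $T$ have the same entry (the same element of ${\bf Z}_q\cup\{*\}$) in column $s$.
   Context: A subcube of ${\bf Z}_q^n$ is obtained by fixing some coordinates and letting the others run through ${\bf Z}_q$; its dimension is the number of free coordinates, and its star pattern is the vector over ${\bf Z}_q\cup\{*\}$ with the fixed values in fixed coordinates and $*$ in free ones. The star matrix of a partition of ${\bf Z}_q^n$ into subcubes is the matrix whose rows are the star patterns of the subcubes. Fractal matrices: $M_{q,0}$ has one row and zero columns; for $m\ge1$, $M_{q,m}$ consists of $q$ horizontal blocks indexed by $a=0,\dots,q-1$, each with $q^{m-1}$ rows; its first column has entry $a$ in every row of block $a$; its remaining columns are divided into $q$ vertical stripes of width equal to the number of columns of $M_{q,m-1}$, and in block $a$ the $a$-th stripe is a copy of $M_{q,m-1}$ while other stripes of block $a$ are all $*$. A fractal matrix is any matrix obtained from some $M_{q,m}$ ($m\ge1$) by permuting rows and columns. A submatrix $T$ of $M$ (given by a set of rows and a set of columns, not necessarily consecutive) is a transfractal if $T$ is a fractal matrix (with the same $q$) and each column of $M$ used by $T$ contains only $*$ in all rows of $M$ not used by $T$. *)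

(* Defs.v *)
From mathcomp Require Import all_boot.
Set Implicit Arguments. Unset Strict Implicit. Unset Printing Implicit Defensive.

(* Entries of a star matrix: [Some a] is the element a of Z_q (represented
   as 'I_q), [None] is the star symbol. *)
Definition entry (q : nat) := option 'I_q.

Definition star_matrix (q n k : nat) := 'I_k -> 'I_n -> entry q.

Definition in_subcube (q n : nat) (p : 'I_n -> entry q) (x : 'I_n -> 'I_q) : Prop :=
  forall j, p j = None \/ p j = Some (x j).

Definition subcube_dim (q n : nat) (p : 'I_n -> entry q) : nat :=
  #|[set j | p j == None]|.

Definition is_partition_star_matrix (q n k : nat) (M : star_matrix q n k) : Prop :=
  forall x : 'I_n -> 'I_q,
    exists i, in_subcube (M i) x /\ forall i', in_subcube (M i') x -> i' = i.

Fixpoint fractal_cols (q m : nat) : nat :=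
  match m with
  | 0 => 0
  | S m' => (q * fractal_cols q m').+1
  end.

(* Entries of M_{q,m}, rows indexed by r < q^m, columns by c < fractal_cols q m,
   numbered from 0; entries are option nat (None stands for the star). *)
Fixpoint fractal_entry (q m r c : nat) : option nat :=
  match m with
  | 0 => None
  | S m' =>
      let a := r %/ q ^ m' in
      if c == 0 then Some a
      else
        let c' := c.-1 in
        let w := fractal_cols q m' in
        if c' %/ w == a then fractal_entry q m' (r %% q ^ m') (c' %% w)
        else None
  end.

(* The submatrix of M with row set R and column set C is a fractal matrix:
   it is obtained from some M_{q,m}, m >= 1, by permuting rows and columns,
   i.e. there are bijections R -> [0, q^m) and C -> [0, fractal_cols q m)
   under which the entries agree. *)
Definition is_fractal_submatrix (q n k : nat) (M : star_matrix q n k)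
    (R : {set 'I_k}) (C : {set 'I_n}) : Prop :=
  exists m, 1 <= m /\
  exists (f : 'I_k -> nat) (g : 'I_n -> nat),
    {in R &, injective f} /\
    (forall i, i \in R -> f i < q ^ m) /\
    (forall r, r < q ^ m -> exists2 i, i \in R & f i = r) /\
    {in C &, injective g} /\
    (forall j, j \in C -> g j < fractal_cols q m) /\
    (forall c, c < fractal_cols q m -> exists2 j, j \in C & g j = c) /\
    (forall i j, i \in R -> j \in C ->
       omap (@nat_of_ord q) (M i j) = fractal_entry q m (f i) (g j)).

Definition is_transfractal (q n k : nat) (M : star_matrix q n k)
    (R : {set 'I_k}) (C : {set 'I_n}) : Prop :=
  is_fractal_submatrix M R C /\
  (forall i j, i \notin R -> j \in C -> M i j = None).

(* Main.v *)
Require Import Defs.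
From mathcomp Require Import all_boot.
From mathcomp Require Import zify.

Lemma fractal_distinct q m r1 r2 : 0 < q -> r1 < q ^ m -> r2 < q ^ m -> r1 != r2 ->
  exists c, c < fractal_cols q m /\ exists a1 a2,
    fractal_entry q m r1 c = Some a1 /\ fractal_entry q m r2 c = Some a2 /\ a1 != a2.
Proof.
elim: m r1 r2 => [|m IH] r1 r2 q0 h1 h2 ne.
  rewrite expn0 in h1 h2; lia.
have qm : 0 < q ^ m by rewrite expn_gt0 q0.
case: (eqVneq (r1 %/ q ^ m) (r2 %/ q ^ m)) => ha; last first.
  exists 0; split => //; exists (r1 %/ q ^ m), (r2 %/ q ^ m); by split.
have hm : r1 %% q ^ m != r2 %% q ^ m.
  apply: contra ne => /eqP hm.
  by rewrite (divn_eq r1 (q ^ m)) (divn_eq r2 (q ^ m)) ha hm.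
have [c [hc [b1 [b2 [e1 [e2 nb]]]]]] := IH _ _ q0 (ltn_pmod _ qm) (ltn_pmod _ qm) hm.
have w0 : 0 < fractal_cols q m by lia.
have aq : r1 %/ q ^ m < q.
  by rewrite ltn_divLR // -expnS.
exists ((r1 %/ q ^ m) * fractal_cols q m + c).+1; split.
  rewrite /=; nia.
exists b1, b2.
rewrite /= divnMDl // (divn_small hc) addn0 modnMDl (modn_small hc) eqxx -ha eqxx.
by split.
Qed.

Theorem lemma4 (q n k : nat) (M : star_matrix q n k)
    (R : {set 'I_k}) (C : {set 'I_n}) :
  is_partition_star_matrix M ->
  (forall i i' : 'I_k, subcube_dim (M i) = subcube_dim (M i')) ->
  is_transfractal M R C ->
  forall s : 'I_n, s \notin C ->
  forall i1 i2 : 'I_k, i1 \in R -> i2 \in R -> M i1 s = M i2 s.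
Proof.
move=> Hpart _ [[m [m1 [f [g [finj [fR [fsurj [ginj [gC [gsurj Hent]]]]]]]]]] Hout].
move=> s sC i1 i2 h1 h2.
case: q M Hpart f g finj fR fsurj ginj gC gsurj Hent Hout => [|[|q']] M Hpart f g finj fR fsurj ginj gC gsurj Hent Hout.
- by move: (fR _ h1); rewrite exp0n.
- have e1 := fR _ h1; have e2 := fR _ h2; rewrite exp1n in e1 e2.
  have : f i1 = f i2 by lia.
  by move/finj => -> .
set q := q'.+2 in M Hpart f g finj fR fsurj ginj gC gsurj Hent Hout *.
have Hdist : forall u v, u \in R -> v \in R -> u != v ->
    exists2 c, c \in C & exists a b, M u c = Some a /\ M v c = Some b /\ a != b.
  move=> u v uR vR ne.
  have fne : f u != f v by apply: contra ne => /eqP /finj ->.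
  have [c0 [hc0 [a1 [a2 [ea1 [ea2 na]]]]]] := @fractal_distinct q m (f u) (f v) isT (fR _ uR) (fR _ vR) fne.
  have [j jC gj] := gsurj _ hc0.
  exists j => //.
  move: (Hent _ _ uR jC) (Hent _ _ vR jC); rewrite gj ea1 ea2.
  case: (M u j) => [a|] //= ea; case: (M v j) => [b|] //= eb.
  move: ea eb => /(congr1 (odflt 0)) /= ea /(congr1 (odflt 0)) /= eb.
  exists a, b; split => //; split => //.
  by apply: contra na; rewrite -ea -eb => /eqP ->.
have HA : forall (x x' : 'I_n -> 'I_q) (j1 j2 : 'I_k), j1 \in R -> j2 \in R ->
    in_subcube (M j1) x -> (forall j, j \notin C -> x' j = x j) ->
    (forall j, j \in C -> M j2 j = None \/ M j2 j = Some (x' j)) ->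
    in_subcube (M j2) x'.
  move=> x x' j1 j2 j1R j2R Hx agree Hc.
  have [u [Hu Huniq]] := Hpart x'.
  case: (boolP (u \in R)) => uR.
    case: (eqVneq u j2) => [<- //|ne].
    have [c cC [a [b [ea [eb nab]]]]] := Hdist _ _ uR j2R ne.
    case: (Hu c); rewrite ea // => -[ea'].
    case: (Hc c cC); rewrite eb // => -[eb'].
    by move: nab; rewrite ea' eb' eqxx.
  have Hux : in_subcube (M u) x.
    move=> j; case: (boolP (j \in C)) => jC.
      by left; apply: Hout.
    by rewrite -(agree j jC); apply: Hu.
  have [w [_ Hw]] := Hpart x.
  have euw := Hw _ Hux; have e1w := Hw _ Hx.
  by move: uR; rewrite euw -e1w j1R.
have d : 'I_q := ord0.
have Hw : forall (j1 j2 : 'I_k) b, j1 \in R -> j2 \in R -> M j2 s = Some b -> M j1 s = Some b.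
  move=> j1 j2 b j1R j2R eb.
  pose b' : 'I_q := if b == ord0 then inord 1 else ord0.
  have nb : b' != b.
    rewrite /b'; case: (eqVneq b ord0) => [eb0|nb0].
      by rewrite eb0; apply/eqP => /(congr1 val); rewrite /= inordK.
    by rewrite eq_sym.
  pose dflt (j : 'I_n) := if j == s then b' else d.
  pose x (j : 'I_n) := odflt (dflt j) (M j1 j).
  pose x' (j : 'I_n) := if j \in C then odflt d (M j2 j) else x j.
  have Hx : in_subcube (M j1) x.
    by move=> j; rewrite /x; case: (M j1 j) => [a|]; [right|left].
  have Hx' := HA x x' j1 j2 j1R j2R Hx
    (fun j jC => ifN _ _ jC)
    (fun j jC => ltac:(rewrite /x' jC; case: (M j2 j) => [a|]; [right|left]; done)).
  case: (Hx' s); rewrite eb // => /(congr1 (odflt b)) /= e.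
  move: e; rewrite /x' (negbTE sC) /x /dflt eqxx.
  case: (M j1 s) => [a|] /= e; first by rewrite e.
  by move: nb; rewrite -e eqxx.
case e2: (M i2 s) => [b|].
  exact: Hw e2.
case e1: (M i1 s) => [a|] //.
by rewrite (Hw _ _ _ h2 h1 e1) in e2.
Qed.
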